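(* Let $G=(V,E)$ be a finite simple undirected graph with zipper constraint collection $\mathcal{Z}$, let $D\subseteq Z^2$, and let $\mathbb{S}$ be a downstream-enabled prescription on $D$. If $\mathcal{K}^+$ is a clique cover of the augmented graph $G^+(\mathbb{S})$, then there is a clique cover $\mathcal{K}$ of $G$ with $|\mathcal{K}|\le|\mathcal{K}^+|$ such that: (i) $\mathcal{K}$ is faithful to $\mathbb{S}$; and (ii) $\mathcal{K}$ satisfies every zipper constraint $(U,W,y)\in\mathcal{Z}$ with $U\in D$ and $W\in D$.
   Context: A clique cover of a graph is a collection of cliques whose union is the vertex set. A zipper constraint collection is a finite set $\mathcal{Z}=\{(U_1,W_1,y_1),\dots,(U_m,W_m,y_m)\}$, where each $U_i,W_i\in E$ is an edge of $G$ (a 2-element vertex set) and each $y_i$ is a label. A clique cover $\mathcal{K}$ satisfies the constraint $(U,W,y)$ if either no clique of $\mathcal{K}$ contains $U$, or some clique of $\mathcal{K}$ contains $W$. Let $Z^2=\{U_1,\dots,U_m,W_1,\dots,W_m\}$. Write $P\uparrow Q$ if $(P,Q,y)\in\mathcal{Z}$ for some $y$. Write $P_a\rightsquigarrow P_b$ (''$P_b$ is downstream of $P_a$'') if $P_a\uparrow P_b$, or if $P_a\uparrow P_c$ for some $P_c\in Z^2$ with $P_c\rightsquigarrow P_b$; that is, $\rightsquigarrow$ is the transitive closure of $\uparrow$. A prescription on $D\subseteq Z^2$ is a subset $\mathbb{S}\subseteq D$; the elements of $D\setminus\mathbb{S}$ are off pairs. $\mathbb{S}$ is downstream enabled if, whenever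 $P_a\in\mathbb{S}$ and $P_a\rightsquigarrow P_b$, we have $P_b\in\mathbb{S}$ or $P_b\notin D$. A clique cover $\mathcal{K}$ of $G$ is faithful to $\mathbb{S}$ if every $P\in\mathbb{S}$ lies in some clique of $\mathcal{K}$ and no $P\in D\setminus\mathbb{S}$ lies in any clique of $\mathcal{K}$. Let $G'=(V,E\setminus(D\setminus\mathbb{S}))$. The augmented graph $G^+(\mathbb{S})$ has vertex set $\{[u]:u\in V\}\cup\{[u,w]:\{u,w\}\in\mathbb{S}\}$, where each $[A]$ is a new formal vertex labeled by the set $A$. Two distinct vertices $[A],[B]$ are adjacent if and only if $A\cup B$ is a clique in $G'$. *)

(* Defs.v *)
From mathcomp Require Import all_boot.
Set Implicit Arguments.
Unset Strict Implicit.
Unset Printing Implicit Defensive.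

Section Defs.
Variable T : finType.

Definition simple_graph (e : rel T) : Prop := symmetric e /\ irreflexive e.

Definition is_edge (e : rel T) (A : {set T}) : bool :=
  [exists u, exists w, e u w && (A == [set u; w])].

Definition clique (X : finType) (adj : rel X) (A : {set X}) : bool :=
  [forall x in A, forall y in A, (x != y) ==> adj x y].

Definition clique_cover (X : finType) (Vs : {set X}) (adj : rel X)
    (KK : {set {set X}}) : Prop :=
  (forall K, K \in KK -> K \subset Vs /\ clique adj K) /\
  \bigcup_(K in KK) K = Vs.

Variable Y : eqType.
Definition zipper_coll (e : rel T) (Z : seq ({set T} * {set T} * Y)) : Prop :=
  forall z, z \in Z -> is_edge e z.1.1 /\ is_edge e z.1.2.

Definition Z2 (Z : seq ({set T} * {set T} * Y)) : {set {set T}} :=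
  [set P | has (fun z => (z.1.1 == P) || (z.1.2 == P)) Z].

Definition up (Z : seq ({set T} * {set T} * Y)) : rel {set T} :=
  fun P Q => has (fun z => (z.1.1 == P) && (z.1.2 == Q)) Z.

Definition downstream (Z : seq ({set T} * {set T} * Y)) : rel {set T} :=
  fun P Q => [exists R, up Z P R && connect (up Z) R Q].

Definition downstream_enabled (Z : seq ({set T} * {set T} * Y))
    (D S : {set {set T}}) : Prop :=
  forall Pa Pb, Pa \in S -> downstream Z Pa Pb -> (Pb \in S) \/ (Pb \notin D).

Definition faithful (D S : {set {set T}}) (KK : {set {set T}}) : Prop :=
  (forall P, P \in S -> exists2 K, K \in KK & P \subset K) /\
  (forall P, P \in D :\: S -> forall K, K \in KK -> ~~ (P \subset K)).

Definition satisfies (KK : {set {set T}}) (z : {set T} * {set T} * Y) : Prop :=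
  (forall K, K \in KK -> ~~ (z.1.1 \subset K)) \/ (exists2 K, K \in KK & z.1.2 \subset K).

Definition adj' (e : rel T) (D S : {set {set T}}) : rel T :=
  fun x y => e x y && ([set x; y] \notin D :\: S).

(* augmented graph G^+(S): formal vertex [A] is represented by its label A *)
Definition aug_vertices (S : {set {set T}}) : {set {set T}} :=
  [set [set u] | u : T] :|: S.

Definition aug_adj (e : rel T) (D S : {set {set T}}) : rel {set T} :=
  fun A B => clique (adj' e D S) (A :|: B).

End Defs.

(* Main.v *)
Require Import Defs.
From mathcomp Require Import all_boot.

Lemma pair_in (T : finType) (e : rel T) (x y u w : T) :
  symmetric e -> e u w -> x \in [set u; w] -> y \in [set u; w] -> x != y ->
  e x y /\ [set x; y] = [set u; w].
Proof.
move=> sym euw; rewrite !inE => /orP[]/eqP-> /orP[]/eqP->; rewrite ?eqxx //= => _.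

by split; [rewrite sym | apply: setUC].
Qed.

Theorem lemma4 (T : finType) (Y : eqType) (e : rel T)
    (Z : seq ({set T} * {set T} * Y)) (D S : {set {set T}})
    (KKp : {set {set {set T}}}) :
  simple_graph e ->
  zipper_coll e Z ->
  D \subset Z2 Z ->
  S \subset D ->
  downstream_enabled Z D S ->
  clique_cover (aug_vertices S) (aug_adj e D S) KKp ->
  exists KK : {set {set T}},
    [/\ clique_cover [set: T] e KK,
        #|KK| <= #|KKp|,
        faithful D S KK &
        forall z, z \in Z -> z.1.1 \in D -> z.1.2 \in D -> satisfies KK z].
Proof.
move=> [sym irr] zc DZ SD de [KKsub KKcov].
have edgeZ : forall A, A \in Z2 Z -> exists u w, [/\ e u w, u != w & A = [set u; w]].
{ move=> A; rewrite inE => /hasP[z zZ /orP[]/eqP eA]; have [h1 h2] := zc z zZ;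
  [move: h1 | move: h2]; rewrite eA => /existsP[u /existsP[w /andP[euw /eqP ->]]];
  exists u, w; split=> //; apply/eqP => uw; move: euw; by rewrite uw irr. }
pose f := fun Kp : {set {set T}} => \bigcup_(A in Kp) A.
have adjf : forall Kp, Kp \in KKp -> forall x y, x \in f Kp -> y \in f Kp -> x != y ->
    adj' e D S x y.
{ move=> Kp KpK x y /bigcupP[A AK xA] /bigcupP[B BK yB] xy.
  have [Ksub Kcl] := KKsub Kp KpK.
  case: (eqVneq A B) => [eAB|nAB].
  - subst B. have: A \in aug_vertices S by apply: (subsetP Ksub).
    rewrite inE => /orP[/imsetP[u _ Au]|AS].
    + by move: xA yB xy; rewrite Au !inE => /eqP-> /eqP->; rewrite eqxx.
    + have [u [w [euw _ Auw]]] := edgeZ A (subsetP DZ _ (subsetP SD _ AS)).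
      rewrite Auw in xA yB. have [exy sxy] := @pair_in _ e x y u w sym euw xA yB xy.
      by rewrite /adj' exy sxy -Auw /= in_setD AS.
  - move/forallP: Kcl => /(_ A) /implyP /(_ AK) /forallP /(_ B) /implyP /(_ BK) /implyP /(_ nAB).
    have xAB : x \in A :|: B by rewrite inE xA.
    have yAB : y \in A :|: B by rewrite inE yB orbT.
    by move/forallP/(_ x)/implyP/(_ xAB)/forallP/(_ y)/implyP/(_ yAB)/implyP/(_ xy). }
pose KK := f @: KKp.
have faith1 : forall P, P \in S -> exists2 K, K \in KK & P \subset K.
{ move=> P PS. have: P \in aug_vertices S by rewrite inE PS orbT.
  rewrite -KKcov => /bigcupP[Kp KpK PK]. exists (f Kp); first by apply/imsetP; exists Kp.
  apply/subsetP=> x xP; apply/bigcupP; by exists P. }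
have faith2 : forall P, P \in D :\: S -> forall K, K \in KK -> ~~ (P \subset K).
{ move=> P PDS K /imsetP[Kp KpK ->]; apply/negP=> sub.
  have PD : P \in D by move: PDS; rewrite in_setD => /andP[].
  have [u [w [euw uw Puw]]] := edgeZ P (subsetP DZ _ PD).
  have uP : u \in P by rewrite Puw !inE eqxx.
  have wP : w \in P by rewrite Puw !inE eqxx orbT.
  have /andP[_ ] := adjf Kp KpK u w (subsetP sub u uP) (subsetP sub w wP) uw.
  by rewrite -Puw PDS. }
exists KK; split.
- split.
  + move=> K /imsetP[Kp KpK ->]; split; first exact: subsetT.
    apply/forallP=> x; apply/implyP=> xK; apply/forallP=> y; apply/implyP=> yK; apply/implyP=> xy.
    by have /andP[] := adjf Kp KpK x y xK yK xy.
  + apply/setP=> u; rewrite inE; apply/bigcupP.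
    have: [set u] \in aug_vertices S by rewrite inE; apply/orP; left; apply/imsetP; exists u.
    rewrite -KKcov => /bigcupP[Kp KpK uK]. exists (f Kp); first by apply/imsetP; exists Kp.
    apply/bigcupP; exists [set u] => //; by rewrite inE.
- exact: leq_imset_card.
- by split; [exact: faith1 | exact: faith2].
- move=> z zZ UD WD. rewrite /satisfies.
  case: (boolP [exists K in KK, z.1.1 \subset K]) => [/existsP[K /andP[KK' UK]] | none].
  + right. have US : z.1.1 \in S.
    { apply: contraTT UK => nUS. apply: faith2 => //; by rewrite in_setD nUS UD. }
    have ds : downstream Z z.1.1 z.1.2.
    { apply/existsP; exists z.1.2; rewrite connect0 andbT; apply/hasP; exists z => //; by rewrite !eqxx. }
    have [WS|] := de _ _ US ds; last by rewrite WD.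
    exact: faith1.
  + left. move=> K KK'; apply/negP=> UK; move/negP: none; apply; apply/existsP; exists K; by rewrite KK' UK.
Qed.
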